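(* Let $P_n(x)$ be a real polynomial all of whose roots are real, with distinct roots $p_1<\dots<p_m$ of multiplicities $r_1,\dots,r_m$. Put $t_k=\sum_{l=1}^m r_lp_l^k$, $H_m=[t_{i+j-2}]_{i,j=1}^m$, and $\mathbf p_i=[1,p_i,\dots,p_i^{m-1}]$ (row vector). Then for all $i,j\in\{1,\dots,m\}$, $$r_j^{-1}-r_i^{-1}=(\mathbf p_j+\mathbf p_i)\,H_m^{-1}\,(\mathbf p_j-\mathbf p_i)^T.$$ *)

(* Defs.v *)
From HB Require Import structures.
From mathcomp Require Import all_boot all_order all_algebra.
From mathcomp Require Import all_reals.
Set Implicit Arguments. Unset Strict Implicit. Unset Printing Implicit Defensive.
Import Order.TTheory GRing.Theory Num.Theory.
Local Open Scope ring_scope.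

Definition tsum (R : realType) (m : nat) (p : 'I_m -> R) (r : 'I_m -> nat)
  (k : nat) : R := \sum_(l < m) (r l)%:R * p l ^+ k.

(* Hankel matrix H_m = [t_{i+j-2}]_{i,j=1..m}; with 0-based indices t_{i+j} *)
Definition hankel (R : realType) (m : nat) (p : 'I_m -> R) (r : 'I_m -> nat)
  : 'M[R]_m := \matrix_(i < m, j < m) tsum p r (i + j).

Definition vdm_row (R : realType) (m : nat) (x : R) : 'rV[R]_m :=
  \row_(k < m) x ^+ k.

(* Main.v *)
Require Import Defs.
From HB Require Import structures.
From mathcomp Require Import all_boot all_order all_algebra.
From mathcomp Require Import all_reals.
From mathcomp Require Import ring.
Import Order.TTheory GRing.Theory Num.Theory.
Local Open Scope ring_scope.

Theorem corollary1 (R : realType) (P : {poly R}) (m : nat)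
  (p : 'I_m -> R) (r : 'I_m -> nat)
  (hP0 : P != 0)
  (hp : forall a b : 'I_m, (a < b)%N -> p a < p b)
  (hr : forall l : 'I_m, (0 < r l)%N)
  (hfact : P = lead_coef P *: \prod_(l < m) ('X - (p l)%:P) ^+ r l)
  (i j : 'I_m) :
  (r j)%:R^-1 - (r i)%:R^-1 =
  ((vdm_row m (p j) + vdm_row m (p i)) *m invmx (hankel p r)
     *m (vdm_row m (p j) - vdm_row m (p i))^T) 0 0.
Proof.
pose a : 'rV[R]_m := \row_l p l.
pose U : 'M[R]_m := (Vandermonde m a)^T.
pose d : 'rV[R]_m := \row_l (r l)%:R.
pose D : 'M[R]_m := diag_mx d.
have hH : hankel p r = U^T *m (D *m U).
  apply/matrixP => x y; rewrite mul_diag_mx !mxE.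
  apply: eq_bigr => l _; rewrite !mxE exprD; ring.
have hU : U \in unitmx.
  rewrite unitmx_tr unitmxE det_Vandermonde unitfE.
  apply/prodf_neq0 => x _; apply/prodf_neq0 => y xy.
  by rewrite !mxE subr_eq0 gt_eqF // hp.
have hD : D \in unitmx.
  rewrite unitmxE det_diag unitfE; apply/prodf_neq0 => x _.
  by rewrite mxE pnatr_eq0 -lt0n hr.
have hHu : hankel p r \in unitmx.
  by rewrite hH unitmx_mul unitmx_tr hU unitmx_mul hD hU.
pose M := U *m invmx (hankel p r) *m U^T.
have hDM : D *m M = 1%:M.
  apply: (can_inj (mulKmx (x := U^T) _)); first by rewrite unitmx_tr.
  rewrite mulmx1 /M !mulmxA -(mulmxA (U^T) D U) -hH mulmxV //.
  by rewrite mul1mx.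
have hM : forall x y, M x y = (x == y)%:R / (r x)%:R.
  move=> x y; move/matrixP: hDM => /(_ x y).
  rewrite mul_diag_mx !mxE /= => <-.
  rewrite mulrC mulKf // pnatr_eq0 -lt0n hr //.
have hrow : forall b, vdm_row m (p b) = delta_mx 0 b *m U.
  by move=> b; rewrite -rowE; apply/rowP => k; rewrite !mxE.
rewrite !hrow -mulmxDl -mulmxBl trmx_mul !mulmxA.
rewrite -[_ *m invmx _ *m _]mulmxA -(mulmxA _ U) -/M.
rewrite (mulmxA U) -/M.
have -> : M = diag_mx (\row_x (r x)%:R^-1).
  apply/matrixP => x y; rewrite hM !mxE.
  by case: eqP => [->|_]; rewrite ?mulr1n ?mulr0n ?div1r ?mul0r.
have [->|nij] := eqVneq i j.
  by rewrite !subrr trmx0 mulmx0 mxE.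
rewrite mul_mx_diag !mxE (bigD1 j) //= (bigD1 i) /=; last exact: nij.
rewrite big1 ?addr0.
  rewrite !mxE !eqxx (negPf nij) eq_sym (negPf nij) /=.
  rewrite !mulr1n !mulr0n; ring.
move=> k /andP [kj ki]; rewrite !mxE (negPf kj) (negPf ki) /=.
by rewrite !mulr0n; ring.
Qed.
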